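(* Let $d$ be a positive integer and let $w,v$ be type sequences each having $r$ occurrences of `$+$' and $c$ occurrences of `$-$'. Let $T$ be a skew $d$-semistandard $w$-oscillating tableau and $P$ a skew $d$-semistandard $v$-oscillating tableau that correspond under the oscillating skew $d$-RSK correspondence, i.e. there is a skew $d$-RSK growth diagram on $[0,r]\times[0,c]$ whose $d$-staircases along $\mathcal{P}^w$ form $T$ and along $\mathcal{P}^v$ form $P$. Then: (i) $T$ and $P$ have the same inner shape and the same outer shape; (ii) $\mathrm{wt}^+(T)=\mathrm{wt}^+(P)$ and $\mathrm{wt}^-(T)=\mathrm{wt}^-(P)$; (iii) $\mathrm{MCW}_d(T)=\mathrm{MCW}_d(P)$; (iv) the reversals $T^{\mathrm{rev}}$ and $P^{\mathrm{rev}}$ correspond to each other under the oscillating skew $d$-RSK correspondence (as tableaux of types $w^*$ and $v^*$, where $u^*$ denotes $u$ reversed with `$+$' and `$-$' interchanged).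
   Context: A $d$-staircase is an integer sequence $\lambda=(\lambda_1\ge\cdots\ge\lambda_d)$ (entries may be negative), $|\lambda|=\sum\lambda_i$. $\alpha\prec\beta$ (also $\beta\succ\alpha$) means $\beta_1\ge\alpha_1\ge\beta_2\ge\cdots\ge\beta_d\ge\alpha_d$; in that case $\mathrm{MCW}_d(\alpha,\beta)=\mathrm{MCW}_d(\beta,\alpha)=\beta_1-\alpha_d$. For $w=w_1\cdots w_k$, a skew $d$-semistandard $w$-oscillating tableau is a sequence of $d$-staircases $T=(\lambda^{(0)},\ldots,\lambda^{(k)})$ with $\lambda^{(i-1)}\prec\lambda^{(i)}$ if $w_i=+$ and $\lambda^{(i-1)}\succ\lambda^{(i)}$ if $w_i=-$; its inner shape is $\lambda^{(0)}$ and outer shape $\lambda^{(k)}$; $\mathrm{MCW}_d(T)=\max_i\mathrm{MCW}_d(\lambda^{(i-1)},\lambda^{(i)})$; $\mathrm{wt}^+(T)_i=|\lambda^{(a_i)}|-|\lambda^{(a_i-1)}|$ with $a_i$ the index of the $i$-th `$+$' in $w$, and $\mathrm{wt}^-(T)_i=|\lambda^{(b_i-1)}|-|\lambda^{(b_i)}|$ with $b_i$ the index of the $i$-th-to-last `$-$' in $w$. Its reversal $T^{\mathrm{rev}}=(\lambda^{(k)},\ldots,\lambda^{(0)})$ is a skew $d$-semistandard $w^*$-oscillating tableau. For a type sequence $u$ with $r$ `$+$'s and $c$ `$-$'s, $\mathcal{P}^u$ is the lattice path from $(r,0)$ to $(0,c)$ with an up step for each `$+$' and left step for each `$-$' in order.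 A skew $d$-RSK growth diagram on $[0,r]\times[0,c]$ assigns a $d$-staircase to each lattice point (no boundary condition; all cell entries $0$) such that each unit cell with bottom-left, top-left, bottom-right, top-right corners $\kappa,\mu,\nu,\rho$ satisfies $\mu\succ\kappa\prec\nu$, $\mu\prec\rho\succ\nu$, $\rho_1+\kappa_d=\min(\mu_d,\nu_d)+\max(\mu_1,\nu_1)$, $\rho_i+\kappa_{i-1}=\min(\mu_{i-1},\nu_{i-1})+\max(\mu_i,\nu_i)$ ($2\le i\le d$). Any skew $d$-semistandard $u$-oscillating tableau placed along $\mathcal{P}^u$ extends uniquely to such a diagram; the oscillating skew $d$-RSK correspondence sends $T$ to the sequence read along $\mathcal{P}^v$ in that diagram. *)

(* Defs.v *)
From mathcomp Require Import all_boot all_order all_algebra.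
Set Implicit Arguments. Unset Strict Implicit. Unset Printing Implicit Defensive.
Import Order.TTheory GRing.Theory Num.Theory.
Local Open Scope ring_scope.

(* A d-staircase is a sequence of d integers lam = [lam_1; ...; lam_d]
   (0-based: lam`_0 ... lam`_(d-1)), weakly decreasing. *)
Definition staircase (d : nat) (lam : seq int) : bool :=
  (size lam == d) && all (fun i => lam`_i.+1 <= lam`_i) (iota 0 d.-1).

Definition sizez (lam : seq int) : int := \sum_(x <- lam) x.

Definition interl (d : nat) (a b : seq int) : bool :=
  all (fun i => a`_i <= b`_i) (iota 0 d) &&
  all (fun i => b`_i.+1 <= a`_i) (iota 0 d.-1).

(* Type sequences: true = '+', false = '-'. *)
Definition tseq := seq bool.

Definition star (u : tseq) : tseq := rev (map negb u).

(* Skew d-semistandard w-oscillating tableau, as the sequence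
   [lam^(0); ...; lam^(k)] *)
Definition osc_tableau (d : nat) (w : tseq) (T : seq (seq int)) : bool :=
  (size T == (size w).+1) && all (staircase d) T &&
  all (fun i => if nth true w i then interl d (nth [::] T i) (nth [::] T i.+1)
                else interl d (nth [::] T i.+1) (nth [::] T i))
      (iota 0 (size w)).

Definition inner_shape (T : seq (seq int)) : seq int := head [::] T.
Definition outer_shape (T : seq (seq int)) : seq int := last [::] T.

Definition wt_plus (w : tseq) (T : seq (seq int)) : seq int :=
  [seq sizez (nth [::] T i.+1) - sizez (nth [::] T i)
  | i <- iota 0 (size w) & nth true w i].

Definition wt_minus (w : tseq) (T : seq (seq int)) : seq int :=
  rev [seq sizez (nth [::] T i) - sizez (nth [::] T i.+1)
      | i <- iota 0 (size w) & ~~ nth true w i].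

Definition mcw_pair (d : nat) (a b : seq int) : int := b`_0 - a`_(d.-1).

(* MCW_d(T): maximum over steps (the step with w_i = + has lam^(i-1) ≺ lam^(i),
   the step with w_i = - has lam^(i) ≺ lam^(i-1)); all these values are >= 0,
   so 0 is used as the value of the empty maximum. *)
Definition mcw (d : nat) (w : tseq) (T : seq (seq int)) : int :=
  foldr Num.max 0
    [seq (if nth true w i then mcw_pair d (nth [::] T i) (nth [::] T i.+1)
          else mcw_pair d (nth [::] T i.+1) (nth [::] T i))
    | i <- iota 0 (size w)].

(* Growth diagram: g x y is the staircase at lattice point (x,y), x horizontal
   in [0, c] (c = number of '-'), y vertical in [0, r] (r = number of '+'). *)
Definition cell_ok (d : nat) (ka mu nu rho : seq int) : Prop :=
  [/\ interl d ka mu /\ interl d ka nu, interl d mu rho /\ interl d nu rho,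
      rho`_0 + ka`_(d.-1) = Num.min mu`_(d.-1) nu`_(d.-1) + Num.max mu`_0 nu`_0 &
      forall i, (1 <= i < d)%N ->
        rho`_i + ka`_(i.-1) = Num.min mu`_(i.-1) nu`_(i.-1) + Num.max mu`_i nu`_i].

Definition growth_diagram (d r c : nat) (g : nat -> nat -> seq int) : Prop :=
  (forall x y, (x <= c)%N -> (y <= r)%N -> staircase d (g x y)) /\
  (forall x y, (x < c)%N -> (y < r)%N ->
     cell_ok d (g x y) (g x y.+1) (g x.+1 y) (g x.+1 y.+1)).

Definition path_step (b : bool) (p : nat * nat) : nat * nat :=
  if b then (p.1, p.2.+1) else (p.1.-1, p.2).

Fixpoint path_from (p : nat * nat) (u : tseq) : seq (nat * nat) :=
  p :: (if u is b :: u' then path_from (path_step b p) u' else [::]).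

(* P^u starts at (c, 0), c = number of '-' in u, and ends at (0, r). *)
Definition lattice_path (u : tseq) : seq (nat * nat) :=
  path_from (count negb u, 0%N) u.

Definition read_along (g : nat -> nat -> seq int) (u : tseq) : seq (seq int) :=
  [seq g p.1 p.2 | p <- lattice_path u].

Definition rsk_corr (d : nat) (w v : tseq) (T P : seq (seq int)) : Prop :=
  exists g, growth_diagram d (count id w) (count negb w) g /\
            read_along g w = T /\ read_along g v = P.

(* Main.v *)
Require Import Defs.
From mathcomp Require Import all_boot all_order all_algebra zify.
Import Order.TTheory GRing.Theory Num.Theory.
Local Open Scope ring_scope.

Lemma mcw_cons d b u t0 T :
  mcw d (b :: u) (t0 :: T) =
  Num.max (if b then mcw_pair d t0 (nth [::] T 0) else mcw_pair d (nth [::] T 0) t0)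
          (mcw d u T).
Proof.
rewrite /mcw /=; congr (Num.max _ (foldr _ _ _)).
rewrite -[1%N]/(1+0)%N iotaDl -map_comp; apply: eq_map => i /=.
by rewrite add1n.
Qed.

Lemma wtp_cons b u t0 T :
  wt_plus (b :: u) (t0 :: T) =
  if b then (sizez (nth [::] T 0) - sizez t0) :: wt_plus u T else wt_plus u T.
Proof.
rewrite /wt_plus /= -[1%N]/(1+0)%N iotaDl filter_map.
rewrite (@eq_filter _ _ (nth true u)); last by move=> i /=.
by case: b => /=; rewrite -map_comp; [congr cons|]; apply: eq_map => i /=.
Qed.

Lemma wtm_cons b u t0 T :
  wt_minus (b :: u) (t0 :: T) =
  if b then wt_minus u T else rcons (wt_minus u T) (sizez t0 - sizez (nth [::] T 0)).
Proof.
rewrite /wt_minus /= -[1%N]/(1+0)%N iotaDl filter_map.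
rewrite (@eq_filter _ _ (fun i => ~~ nth true u i)); last by move=> i /=.
case: b => /=; rewrite -map_comp ?rev_cons.
all: (try congr rcons); congr rev; apply: eq_map => i /=; rewrite ?add1n.
Qed.

Definition endp (p : nat * nat) (u : tseq) := foldl (fun q b => path_step b q) p u.
Definition swp (p : nat * nat) : nat * nat := (p.2, p.1).

Lemma endp_val p u : endp p u = (p.1 - count negb u, p.2 + count id u)%N.
Proof.
elim: u p => [|b u IH] [x y] /=; first by rewrite subn0 addn0.
rewrite /endp /= -/(endp _ u) IH; case: b => /=; congr (_, _).
all: lia.
Qed.

Lemma path_rcons p u b :
  path_from p (rcons u b) = rcons (path_from p u) (path_step b (endp p u)).
Proof. by elim: u p => [|a u IH] p //=; rewrite IH. Qed.

Lemma last_path q p u : last q (path_from p u) = endp p u.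
Proof. by elim: u p q => [|b u IH] p q //=. Qed.

Lemma star_rcons u b : star (rcons u b) = ~~ b :: star u.
Proof. by rewrite /star map_rcons rev_rcons. Qed.

Lemma count_star_id u : count id (star u) = count negb u.
Proof. by rewrite /star count_rev count_map. Qed.

Lemma count_star_neg u : count negb (star u) = count id u.
Proof. by rewrite /star count_rev count_map; apply: eq_count => x /=; rewrite negbK. Qed.

Lemma rev_path p u : (count negb u <= p.1)%N ->
  rev (path_from p u) = map swp (path_from (swp (endp p u)) (star u)).
Proof.
elim/last_ind: u => [|u b IH] Hp; first by case: p Hp.
move: Hp; rewrite -cats1 count_cat cats1 => Hp.
rewrite path_rcons rev_rcons star_rcons /endp foldl_rcons -/(endp p u) /=.
have -> : path_step (~~ b) (swp (path_step b (endp p u))) = swp (endp p u).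
  move: Hp; rewrite endp_val; case: b => /= Hp; congr (_, _); rewrite /=; lia.
rewrite -IH; last lia.
by case: (path_step b (endp p u)).
Qed.

Lemma sizez_nth (s : seq int) : sizez s = \sum_(i < size s) s`_i.
Proof. by rewrite /sizez (big_nth 0) big_mkord. Qed.

Lemma stair_size d l : staircase d l -> size l = d.
Proof. by case/andP => /eqP. Qed.

Lemma cell_size d ka mu nu rho : (0 < d)%N ->
  size ka = d -> size mu = d -> size nu = d -> size rho = d ->
  cell_ok d ka mu nu rho -> sizez rho + sizez ka = sizez mu + sizez nu.
Proof.
case: d => // n _ Ska Smu Snu Srho [_ _ E0 Ei].
rewrite !sizez_nth Ska Smu Snu Srho.
rewrite big_ord_recl (big_ord_recr n (fun i => ka`_i)) /=.
have H1 : \sum_(i < n) (rho`_(bump 0 i) + ka`_i)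
   = \sum_(i < n) (Num.min mu`_i nu`_i + Num.max mu`_(i.+1) nu`_(i.+1)).
  apply: eq_bigr => i _; have := Ei i.+1; rewrite /= ltnS ltn_ord => ->//.
have H2 : \sum_(i < n.+1) mu`_i + \sum_(i < n.+1) nu`_i
   = \sum_(i < n.+1) Num.min mu`_i nu`_i + \sum_(i < n.+1) Num.max mu`_i nu`_i.
  rewrite -!big_split; apply: eq_bigr => i _ /=; lia.
rewrite H2 big_ord_recr (big_ord_recl n (fun i => Num.max mu`_i nu`_i)) /=.
move: H1; rewrite !big_split /= => H1.
move: E0; rewrite /= => E0.
have Eb : forall F : nat -> int, \sum_(i < n) F (bump 0 i) = \sum_(i < n) F i.+1.
  by move=> F; apply: eq_bigr => i _; rewrite /bump leq0n add1n.
move: H1; rewrite (Eb (fun i => rho`_i)) => H1.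
rewrite (Eb (fun i => rho`_i)) (Eb (fun i => Num.max mu`_i nu`_i)).
move: H1 E0; set A := \sum_(i < n) rho`_i.+1; set B := \sum_(i < n) ka`_i.
set C := \sum_(i < n) Num.min mu`_i nu`_i; set D := \sum_(i < n) Num.max mu`_i.+1 nu`_i.+1.
move=> H1 E0; lia.
Qed.

Lemma cell_sz d r c g x y : (0 < d)%N -> growth_diagram d r c g ->
  (x < c)%N -> (y < r)%N ->
  sizez (g x.+1 y.+1) + sizez (g x y) = sizez (g x y.+1) + sizez (g x.+1 y).
Proof.
move=> d0 [Hs Hc] Hx Hy; apply: (cell_size _ _ _ _ _ d0 _ _ _ _ (Hc x y Hx Hy));
  apply: stair_size; apply: Hs; lia.
Qed.

Lemma Dconst d r c g : (0 < d)%N -> growth_diagram d r c g ->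
  forall x y, (x <= c)%N -> (y < r)%N ->
  sizez (g x y.+1) - sizez (g x y) = sizez (g 0%N y.+1) - sizez (g 0%N y).
Proof.
move=> d0 gd; elim=> [//|x IH] y Hx Hy.
have Hx' : (x < c)%N by lia.
rewrite -IH; [|lia|lia]; have := cell_sz _ _ _ _ _ _ d0 gd Hx' Hy; lia.
Qed.

Lemma Econst d r c g : (0 < d)%N -> growth_diagram d r c g ->
  forall x y, (x < c)%N -> (y <= r)%N ->
  sizez (g x.+1 y) - sizez (g x y) = sizez (g x.+1 0%N) - sizez (g x 0%N).
Proof.
move=> d0 gd x; elim=> [//|y IH] Hx Hy.
have Hy' : (y < r)%N by lia.
rewrite -IH; [|lia|lia]; have := cell_sz _ _ _ _ _ _ d0 gd Hx Hy'; lia.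
Qed.

Lemma head_read (g : nat -> nat -> seq int) p u :
  nth [::] [seq g q.1 q.2 | q <- path_from p u] 0 = g p.1 p.2.
Proof. by case: u. Qed.

Lemma wtp_read d r c g : (0 < d)%N -> growth_diagram d r c g ->
  forall u p, (count negb u <= p.1)%N -> (p.1 <= c)%N -> (p.2 + count id u <= r)%N ->
  wt_plus u [seq g q.1 q.2 | q <- path_from p u] =
  map (fun y => sizez (g 0%N y.+1) - sizez (g 0%N y)) (iota p.2 (count id u)).
Proof.
move=> d0 gd; elim=> [|b u IH] [x y] //= H1 H2 H3.
rewrite wtp_cons head_read; case: b H1 H3 => /= H1 H3; rewrite ?add0n.
  rewrite IH /=; [|lia|lia|lia].
  by rewrite (Dconst _ _ _ _ d0 gd) //; lia.
by rewrite IH /= ?add0n //; lia.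
Qed.

Lemma wtm_read d r c g : (0 < d)%N -> growth_diagram d r c g ->
  forall u p, (count negb u <= p.1)%N -> (p.1 <= c)%N -> (p.2 + count id u <= r)%N ->
  wt_minus u [seq g q.1 q.2 | q <- path_from p u] =
  map (fun x => sizez (g x.+1 0%N) - sizez (g x 0%N))
      (iota (p.1 - count negb u) (count negb u)).
Proof.
move=> d0 gd; elim=> [|b u IH] [x y] //= H1 H2 H3.
rewrite wtm_cons head_read; case: b H1 H3 => /= H1 H3; rewrite ?add0n.
  by rewrite IH /= ?add0n //; lia.
case: x H1 H2 => [|x] H1 H2; first lia.
rewrite (_ : (x.+1 - (1 + count negb u) = x - count negb u)%N); last lia.
set E := fun x => sizez (g x.+1 0%N) - sizez (g x 0%N).
transitivity (map E (x - count negb u :: iota (x - count negb u).+1 (count negb u))%N); last by [].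
have -> : (x - count negb u :: iota (x - count negb u).+1 (count negb u))%N
  = rcons (iota (x - count negb u) (count negb u)) x.
  change (iota (x - count negb u) (count negb u).+1 = rcons (iota (x - count negb u) (count negb u)) x).
  rewrite -addn1 iotaD (_ : (x - count negb u + count negb u = x)%N) ?cats1 //; lia.
rewrite map_rcons IH /=; [|lia|lia|lia].
by rewrite /E (Econst _ _ _ _ d0 gd) //; lia.
Qed.

Definition sval d (g : nat -> nat -> seq int) (b : bool) (p : nat * nat) : int :=
  if b then mcw_pair d (g p.1 p.2) (g p.1 p.2.+1)
  else mcw_pair d (g p.1.-1 p.2) (g p.1 p.2).

Fixpoint mcwG d g (u : tseq) (p : nat * nat) : int :=
  if u is b :: u' then Num.max (sval d g b p) (mcwG d g u' (path_step b p)) else 0.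

Lemma mcw_read d g u p :
  mcw d u [seq g q.1 q.2 | q <- path_from p u] = mcwG d g u p.
Proof.
elim: u p => [|b u IH] [x y] //=.
by rewrite mcw_cons head_read IH; case: b.
Qed.

Lemma cell_mcw d r c g x y : growth_diagram d r c g -> (x < c)%N -> (y < r)%N ->
  Num.max (sval d g true (x.+1, y)) (sval d g false (x.+1, y.+1)) =
  Num.max (sval d g false (x.+1, y)) (sval d g true (x, y)).
Proof.
move=> [_ Hc] Hx Hy; case: (Hc x y Hx Hy) => _ _ E0 _.
rewrite /sval /mcw_pair /=; move: E0.
set a := (g x.+1 y.+1)`_0; set b := (g x y)`_d.-1; set m1 := (g x y.+1)`_d.-1.
set n1 := (g x.+1 y)`_d.-1; set m0 := (g x y.+1)`_0; set n0 := (g x.+1 y)`_0.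
move=> E0; lia.
Qed.

Definition canon (u : tseq) := nseq (count negb u) false ++ nseq (count id u) true.

Lemma mcw_canon d r c g : growth_diagram d r c g ->
  forall n u p, size u = n -> (count negb u <= p.1)%N -> (p.1 <= c)%N ->
  (p.2 + count id u <= r)%N -> mcwG d g u p = mcwG d g (canon u) p.
Proof.
move=> gd; elim=> [|n IH] u [x y] Hs H1 H2 H3; first by case: u Hs H1 H3.
move: H2; rewrite /= => H2.
case: u Hs H1 H3 => [//|b u] /= [Hs] H1 H3.
case: b H1 H3 => /= H1 H3; last first.
  rewrite (IH u (x.-1, y)) /= /canon ?add0n //; lia.
rewrite (IH u (x, y.+1)) //=; last lia.
rewrite /canon /= !add0n; case E: (count negb u) => [|k] /=; first by [].
set s := (nseq k false ++ nseq (count id u) true).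
have cs : count negb s = k /\ count id s = count id u.
  by rewrite /s !count_cat !count_nseq /=; split; lia.
have Hs' : size (true :: s) = n.
  rewrite /= /s size_cat !size_nseq.
  have := count_predC id u; rewrite /predC /=.
  have -> : count (fun x => ~~ x) u = count negb u by [].
  lia.
case: x H1 H2 => [|x] H1 H2; first lia.
have HI : mcwG d g (true :: s) (x, y) = mcwG d g (canon (true :: s)) (x, y).
  by apply: IH => //=; rewrite ?add0n ?cs.1 ?cs.2; lia.
move: HI; rewrite /canon /= !add0n cs.1 cs.2 => <-.
rewrite /=.
have Hy : (y < r)%N by lia.
have := cell_mcw d r c g x y gd H2 Hy; rewrite /sval /=.
set A := mcwG d g s (x, y.+1); lia.
Qed.

Lemma outer_read (g : nat -> nat -> seq int) p u :
  outer_shape [seq g q.1 q.2 | q <- path_from p u] = g (endp p u).1 (endp p u).2.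
Proof.
rewrite /outer_shape; case: u => [|b u] //=.
by rewrite (last_map (fun q => g q.1 q.2)) last_path.
Qed.

Lemma inner_read (g : nat -> nat -> seq int) p u :
  inner_shape [seq g q.1 q.2 | q <- path_from p u] = g p.1 p.2.
Proof. by case: u. Qed.

Lemma rev_read (g : nat -> nat -> seq int) u :
  [seq g q.2 q.1 | q <- path_from (count id u, 0%N) (star u)] =
  rev [seq g q.1 q.2 | q <- path_from (count negb u, 0%N) u].
Proof.
rewrite -map_rev rev_path // endp_val /= subnn add0n -map_comp.
by apply: eq_map => q.
Qed.

Theorem theorem7p2 (d : nat) (w v : tseq) (T P : seq (seq int)) :
  (0 < d)%N ->
  count id w = count id v -> count negb w = count negb v ->
  osc_tableau d w T -> osc_tableau d v P ->
  rsk_corr d w v T P ->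
  [/\ inner_shape T = inner_shape P /\ outer_shape T = outer_shape P,
      wt_plus w T = wt_plus v P /\ wt_minus w T = wt_minus v P,
      mcw d w T = mcw d v P &
      rsk_corr d (star w) (star v) (rev T) (rev P)].
Proof.
move=> d0 Hr Hc _ _ [g [gd [eT eP]]].
subst T P; rewrite /read_along /lattice_path.
have gdv : growth_diagram d (count id v) (count negb v) g by rewrite -Hr -Hc.
split.
- split; first by rewrite !inner_read Hc.
  by rewrite !outer_read !endp_val /= -Hr -Hc !subnn.
- split.
    rewrite (wtp_read d _ _ g d0 gd) /= ?add0n; try lia.
    rewrite (wtp_read d _ _ g d0 gdv) /= ?add0n; try lia.
    by rewrite Hr.
  rewrite (wtm_read d _ _ g d0 gd) /= ?add0n; try lia.
  rewrite (wtm_read d _ _ g d0 gdv) /= ?add0n; try lia.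
  by rewrite Hc.
- rewrite !mcw_read (mcw_canon d _ _ g gd (size w) w) /= ?add0n; try lia.
  rewrite (mcw_canon d _ _ g gdv (size v) v) /= ?add0n; try lia.
  by rewrite /canon -Hr -Hc.
- exists (fun x y => g y x); split; last split.
  + rewrite count_star_id count_star_neg; case: gd => Hs Hcell; split.
      by move=> x y Hx Hy; apply: Hs.
    move=> x y Hx Hy; case: (Hcell y x Hy Hx) => [[h1 h2] [h3 h4] e0 ei].
    split; [by split|by split| |].
      move: e0; set a := (g y.+1 x.+1)`_0; set b := (g y x)`_d.-1.
      set m1 := (g y x.+1)`_d.-1; set n1 := (g y.+1 x)`_d.-1.
      set m0 := (g y x.+1)`_0; set n0 := (g y.+1 x)`_0; move=> e0; lia.
    move=> i Hi; move: (ei i Hi).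
    set a := (g y.+1 x.+1)`_i; set b := (g y x)`_i.-1.
    set m1 := (g y x.+1)`_i.-1; set n1 := (g y.+1 x)`_i.-1.
    set m0 := (g y x.+1)`_i; set n0 := (g y.+1 x)`_i; move=> e1; lia.
  + by rewrite /read_along /lattice_path count_star_neg rev_read.
  + by rewrite /read_along /lattice_path count_star_neg rev_read.
Qed.
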